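(* Let $A=op\langle\{F_1=w_1,\dots,F_n=w_n\}\rangle\prec N$ be an aggregate and let $G$ be the formula $$\bigwedge_{I\subseteq\{1,\dots,n\}\,:\,op(\{w_i:i\in I\})\not\prec N}\Big(\big(\bigwedge_{i\in I}F_i\big)\to\big(\bigvee_{i\in\overline I}F_i\big)\Big),\qquad \overline I=\{1,\dots,n\}\setminus I.$$ If $A$ is monotone, then $G$ is strongly equivalent to $\bigwedge_{I\subseteq\{1,\dots,n\}:op(\{w_i:i\in I\})\not\prec N}\big(\bigvee_{i\in\overline I}F_i\big)$. If $A$ is antimonotone, then $G$ is strongly equivalent to $\bigwedge_{I\subseteq\{1,\dots,n\}:op(\{w_i:i\in I\})\not\prec N}\big(\neg\bigwedge_{i\in I}F_i\big)$.
   Context: Formulas with aggregates: atoms and $\bot$; combinations by $\wedge,\vee,\to$; and aggregates $op\langle\{F_1=w_1,\dots,F_n=w_n\}\rangle\prec N$ with $op$ a function from finite multisets of reals to $\mathbb R\cup\{\pm\infty\}$, $F_i$ formulas with aggregates, $w_i,N$ reals, $\prec$ a binary relation on reals ($\not\prec$ its negation). $\top:=\bot\to\bot$, $\neg F:=F\to\bot$; empty conjunction is $\top$, empty disjunction is $\bot$. $X$ satisfies the aggregate iff $op(W_X)\prec N$, $W_X$ the multiset of $w_i$ with $X\models F_i$. Reduct: $\bot^X=\bot$; $a^X=a$ if $a\in X$, else $\bot$; $(F\otimes G)^X=F^X\otimes G^X$ if $X\models F\otimes G$, else $\bot$; for an aggregate $A$, $A^X$ is $op\langle\{F_1^X=w_1,\dots,F_n^X=w_n\}\rangle\prec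 N$ if $X\models A$ and $\bot$ otherwise. $X$ is a stable model of a theory $\Gamma$ if $X\models\Gamma^X$ and no proper subset of $X$ satisfies $\Gamma^X$; two formulas are strongly equivalent if adding either of them to any theory yields the same stable models. The aggregate is monotone if for all sub-multisets $W_1\subseteq W_2\subseteq\{w_1,\dots,w_n\}$, $op(W_1)\prec N$ implies $op(W_2)\prec N$; antimonotone if for all $W_2\subseteq W_1\subseteq\{w_1,\dots,w_n\}$, $op(W_1)\prec N$ implies $op(W_2)\prec N$. *)

(* Defs.v *)
From Stdlib Require Import Reals List Bool ClassicalEpsilon.
Import ListNotations.
Open Scope R_scope.
Set Implicit Arguments.

Inductive ExtR : Type := Fin (r : R) | PInf | NInf.

(* A (finite) multiset of reals is given by its multiplicity function. *)
Definition mset := R -> nat.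

Definition submset (W1 W2 : mset) : Prop := forall r, (W1 r <= W2 r)%nat.

(* multiset {w_i : b_i = true} for a weight list ws and a characteristic
   vector b of an index subset *)
Fixpoint mset_of (ws : list R) (b : list bool) (r : R) : nat :=
  match ws, b with
  | w :: ws', c :: b' =>
      ((if c && (if Req_EM_T w r then true else false) then 1 else 0)
       + mset_of ws' b' r)%nat
  | _, _ => 0%nat
  end.

Definition mset_full (ws : list R) : mset := mset_of ws (repeat true (length ws)).

Section Formulas.
Variable Atom : Type.

(* Formulas with aggregates.  Agg op prec [(F_1,w_1);...;(F_n,w_n)] N  is
   op<{F_1=w_1,...,F_n=w_n}> prec N. *)
Inductive formula : Type :=
| FAtom (a : Atom)
| FBot
| FAnd (F G : formula)
| FOr (F G : formula)
| FImp (F G : formula)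
| Agg (op : mset -> ExtR) (prec : ExtR -> R -> Prop)
      (args : list (formula * R)) (N : R).

Definition FTop : formula := FImp FBot FBot.
Definition FNeg (F : formula) : formula := FImp F FBot.

Definition interp := Atom -> Prop.

(* satisfaction; for an aggregate, b is the characteristic vector of
   {i | X |= F_i}, so W_X = mset_of (weights) b *)
Fixpoint sat (X : interp) (F : formula) : Prop :=
  match F with
  | FAtom a => X a
  | FBot => False
  | FAnd F G => sat X F /\ sat X G
  | FOr F G => sat X F \/ sat X G
  | FImp F G => sat X F -> sat X G
  | Agg op prec args N =>
      exists b : list bool,
        (fix satl (l : list (formula * R)) (b : list bool) : Prop :=
           match l, b with
           | [], [] => True
           | (G, _) :: t, c :: b' => (c = true <-> sat X G) /\ satl t b'
           | _, _ => False
           end) args b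
        /\ prec (op (mset_of (map snd args) b)) N
  end.

Definition dec (P : Prop) : {P} + {~ P} := excluded_middle_informative P.

Fixpoint reduct (X : interp) (F : formula) : formula :=
  match F with
  | FAtom a => if dec (X a) then FAtom a else FBot
  | FBot => FBot
  | FAnd G H => if dec (sat X F) then FAnd (reduct X G) (reduct X H) else FBot
  | FOr G H => if dec (sat X F) then FOr (reduct X G) (reduct X H) else FBot
  | FImp G H => if dec (sat X F) then FImp (reduct X G) (reduct X H) else FBot
  | Agg op prec args N =>
      if dec (sat X F) then
        Agg op prec
          ((fix rl (l : list (formula * R)) : list (formula * R) :=
              match l with
              | [] => []
              | (G, w) :: t => (reduct X G, w) :: rl t
              end) args) N
      else FBot
  end.

Definition theory := formula -> Prop.

Definition stable_model (X : interp) (T : theory) : Prop :=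
  (forall F, T F -> sat X (reduct X F)) /\
  forall Y : interp,
    (forall a, Y a -> X a) -> (exists a, X a /\ ~ Y a) ->
    ~ (forall F, T F -> sat Y (reduct X F)).

Definition add_formula (T : theory) (F : formula) : theory :=
  fun H => T H \/ H = F.

Definition strongly_equivalent (F G : formula) : Prop :=
  forall (T : theory) (X : interp),
    stable_model X (add_formula T F) <-> stable_model X (add_formula T G).

Fixpoint bigAnd (l : list formula) : formula :=
  match l with
  | [] => FTop
  | [F] => F
  | F :: t => FAnd F (bigAnd t)
  end.

Fixpoint bigOr (l : list formula) : formula :=
  match l with
  | [] => FBot
  | [F] => F
  | F :: t => FOr F (bigOr t)
  end.

Fixpoint select (l : list formula) (I : list bool) : list formula :=
  match l, I with
  | F :: t, c :: I' => if c then F :: select t I' else select t I'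
  | _, _ => []
  end.

Fixpoint subsets (n : nat) : list (list bool) :=
  match n with
  | O => [[]]
  | S m => map (cons true) (subsets m) ++ map (cons false) (subsets m)
  end.

Definition conj_over_failing (op : mset -> ExtR) (prec : ExtR -> R -> Prop)
  (args : list (formula * R)) (N : R) (body : list bool -> formula) : formula :=
  bigAnd (flat_map (fun I =>
            if dec (~ prec (op (mset_of (map snd args) I)) N) then [body I] else [])
          (subsets (length args))).

Definition Fs (args : list (formula * R)) := map fst args.

Definition G_formula op prec args N : formula :=
  conj_over_failing op prec args N (fun I =>
    FImp (bigAnd (select (Fs args) I)) (bigOr (select (Fs args) (map negb I)))).

Definition G_mono op prec args N : formula :=
  conj_over_failing op prec args N (fun I => bigOr (select (Fs args) (map negb I))).

Definition G_anti op prec args N : formula :=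
  conj_over_failing op prec args N (fun I => FNeg (bigAnd (select (Fs args) I))).

End Formulas.

Arguments FBot {Atom}.

Definition agg_monotone (op : mset -> ExtR) (prec : ExtR -> R -> Prop)
  (ws : list R) (N : R) : Prop :=
  forall W1 W2 : mset, submset W1 W2 -> submset W2 (mset_full ws) ->
    prec (op W1) N -> prec (op W2) N.

Definition agg_antimonotone (op : mset -> ExtR) (prec : ExtR -> R -> Prop)
  (ws : list R) (N : R) : Prop :=
  forall W1 W2 : mset, submset W2 W1 -> submset W1 (mset_full ws) ->
    prec (op W1) N -> prec (op W2) N.

(* Main.v *)
Require Import Defs.
From Stdlib Require Import Reals List Classical Arith Lia Bool.
Import ListNotations.
Local Open Scope nat_scope.

Lemma h_t {A} (X Y : interp A) F : sat Y (reduct X F) -> sat X F.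
Proof.
  destruct F; simpl; try (destruct (dec _) as [d|d]; simpl; try tauto); tauto.
Qed.

Lemma h_and {A} (X Y : interp A) F G :
  sat Y (reduct X (FAnd F G)) <-> sat Y (reduct X F) /\ sat Y (reduct X G).
Proof.
  simpl. destruct (dec _) as [d|d]; simpl.
  - tauto.
  - split; [tauto|]. intros [H1 H2]. apply d; split; eapply h_t; eauto.
Qed.

Lemma h_or {A} (X Y : interp A) F G :
  sat Y (reduct X (FOr F G)) <-> sat Y (reduct X F) \/ sat Y (reduct X G).
Proof.
  simpl. destruct (dec _) as [d|d]; simpl.
  - tauto.
  - split; [tauto|]. intros [H1|H1]; apply d; [left|right]; eapply h_t; eauto.
Qed.

Lemma h_imp {A} (X Y : interp A) F G :
  sat Y (reduct X (FImp F G)) <->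
  (sat X F -> sat X G) /\ (sat Y (reduct X F) -> sat Y (reduct X G)).
Proof.
  simpl. destruct (dec _) as [d|d]; simpl; tauto.
Qed.

Lemma h_bigAnd {A} (X Y : interp A) l :
  sat Y (reduct X (bigAnd l)) <-> Forall (fun F => sat Y (reduct X F)) l.
Proof.
  induction l as [|F l IH].
  - simpl. destruct (dec _); simpl; split; auto; intro; apply n; tauto.
  - destruct l as [|G l].
    + simpl bigAnd. split; intro H; [constructor; auto| inversion H; auto].
    + change (bigAnd (F :: G :: l)) with (FAnd F (bigAnd (G :: l))).
      rewrite h_and, IH. split; intro H; [constructor; tauto | inversion H; auto].
Qed.

Lemma t_bigAnd {A} (X : interp A) l :
  sat X (bigAnd l) <-> Forall (sat X) l.
Proof.
  induction l as [|F l IH].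
  - simpl. split; auto.
  - destruct l as [|G l].
    + simpl bigAnd. split; intro H; [constructor; auto| inversion H; auto].
    + change (bigAnd (F :: G :: l)) with (FAnd F (bigAnd (G :: l))).
      simpl sat. rewrite IH. split; intro H; [constructor; tauto | inversion H; auto].
Qed.

Lemma h_bigOr {A} (X Y : interp A) l :
  sat Y (reduct X (bigOr l)) <-> Exists (fun F => sat Y (reduct X F)) l.
Proof.
  induction l as [|F l IH].
  - simpl. split; [tauto| intro H; inversion H].
  - destruct l as [|G l].
    + simpl bigOr. split; intro H; [constructor; auto| inversion H; auto; inversion H1].
    + change (bigOr (F :: G :: l)) with (FOr F (bigOr (G :: l))).
      rewrite h_or, IH. split; intro H.
      * destruct H; [apply Exists_cons_hd|apply Exists_cons_tl]; auto.
      * inversion H; auto.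
Qed.

Lemma t_bigOr {A} (X : interp A) l :
  sat X (bigOr l) <-> Exists (sat X) l.
Proof.
  induction l as [|F l IH].
  - simpl. split; [tauto| intro H; inversion H].
  - destruct l as [|G l].
    + simpl bigOr. split; intro H; [constructor; auto| inversion H; auto; inversion H1].
    + change (bigOr (F :: G :: l)) with (FOr F (bigOr (G :: l))).
      simpl sat. rewrite IH. split; intro H.
      * destruct H; [apply Exists_cons_hd|apply Exists_cons_tl]; auto.
      * inversion H; auto.
Qed.

Lemma subsets_In n I : In I (subsets n) <-> length I = n.
Proof.
  revert I; induction n as [|n IH]; intro I; simpl.
  - split; [intros [<-|[]]; auto | destruct I; simpl; try discriminate; auto].
  - rewrite in_app_iff, !in_map_iff. split.
    + intros [[J [<- HJ]]|[J [<- HJ]]]; simpl; f_equal; apply IH; auto.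
    + destruct I as [|b I]; simpl; try discriminate. intro H; injection H; intro H'.
      destruct b; [left|right]; exists I; split; auto; apply IH; auto.
Qed.

Lemma select_In {A} (fs : list (formula A)) I F :
  In F (select fs I) <->
  exists i, i < length fs /\ nth i I false = true /\ nth i fs FBot = F.
Proof.
  revert I; induction fs as [|G fs IH]; intro I; simpl.
  - split; [tauto| intros [i [Hi _]]; lia].
  - destruct I as [|c I].
    + simpl. split; [tauto|]. intros [i [_ [H _]]]. destruct i; discriminate.
    + split.
      * intro H. destruct c.
        -- destruct H as [<-|H].
           ++ exists 0; simpl; repeat split; auto; lia.
           ++ apply IH in H. destruct H as [i [? [? ?]]]. exists (S i); simpl; repeat split; auto; lia.
        -- apply IH in H. destruct H as [i [? [? ?]]]. exists (S i); simpl; repeat split; auto; lia.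
      * intros [i [Hi [Hc HF]]]. destruct i as [|i]; simpl in *.
        -- subst. left; auto.
        -- assert (In F (select fs I)) by (apply IH; exists i; repeat split; auto; lia).
           destruct c; [right|]; auto.
Qed.

Lemma mset_sub (ws : list R) I J :
  length I = length ws -> length J = length ws ->
  (forall i, i < length ws -> nth i J false = true -> nth i I false = true) ->
  submset (mset_of ws J) (mset_of ws I).
Proof.
  revert I J; induction ws as [|w ws IH]; intros I J HI HJ H r; simpl.
  - lia.
  - destruct I as [|c I]; try discriminate. destruct J as [|d J]; try discriminate.
    simpl in HI, HJ.
    assert (IH' : (mset_of ws J r <= mset_of ws I r)%nat).
    { apply IH; try lia. intros i Hi Hn. apply (H (S i)); simpl; auto; lia. }
    assert (d = true -> c = true) by (intro; subst; apply (H 0); simpl; auto; lia).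
    destruct d, c; simpl; try lia; try (specialize (H0 eq_refl); discriminate).
Qed.

Definition failing {A} (op : mset -> ExtR) (prec : ExtR -> R -> Prop) (args : list (formula A * R)) (N : R) (I : list bool) : Prop :=
  ~ prec (op (mset_of (map snd args) I)) N.

Lemma h_conj {A} (X Y : interp A) op prec args N body :
  sat Y (reduct X (conj_over_failing op prec args N body)) <->
  forall I, length I = length args -> failing op prec args N I -> sat Y (reduct X (body I)).
Proof.
  unfold conj_over_failing. rewrite h_bigAnd, Forall_forall. split.
  - intros H I HI Hf. apply H. apply in_flat_map. exists I. split.
    + apply subsets_In; auto.
    + destruct (dec _); [left; auto| contradiction].
  - intros H x Hx. apply in_flat_map in Hx. destruct Hx as [I [HI Hx]].
    destruct (dec _) as [d|d]; [|destruct Hx].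
    destruct Hx as [<-|[]]. apply H; auto. apply subsets_In; auto.
Qed.

Lemma se_of {A} (F1 F2 : formula A) :
  (forall X Y : interp A, sat Y (reduct X F1) <-> sat Y (reduct X F2)) ->
  strongly_equivalent F1 F2.
Proof.
  intros H T X. unfold stable_model, add_formula.
  split; intros [H1 H2]; split.
  - intros F [HF| ->]; [apply H1; auto| apply H; apply H1; auto].
  - intros Y HY Hp Hc. apply (H2 Y HY Hp). intros F [HF| ->]; [apply Hc; auto| apply H; apply Hc; auto].
  - intros F [HF| ->]; [apply H1; auto| apply H; apply H1; auto].
  - intros Y HY Hp Hc. apply (H2 Y HY Hp). intros F [HF| ->]; [apply Hc; auto| apply H; apply Hc; auto].
Qed.

Lemma nth_negb (I : list bool) i : i < length I -> nth i (map negb I) false = negb (nth i I false).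
Proof.
  intro Hi. rewrite (nth_indep _ false true) by (rewrite length_map; auto).
  apply (map_nth negb I false i).
Qed.

Lemma nth_mk (f : nat -> bool) n i : i < n -> nth i (map f (seq 0 n)) false = f i.
Proof.
  intro Hi. rewrite (nth_indep _ false (f 0)) by (rewrite length_map, length_seq; auto).
  rewrite map_nth, seq_nth; auto.
Qed.

Lemma len_mk (f : nat -> bool) n : length (map f (seq 0 n)) = n.
Proof. rewrite length_map, length_seq; auto. Qed.

Lemma sub_full (ws : list R) I : length I = length ws -> submset (mset_of ws I) (mset_full ws).
Proof.
  intro H. unfold mset_full. apply mset_sub; auto.
  - apply repeat_length.
  - intros i Hi _. rewrite nth_repeat_lt; auto.
Qed.

Theorem proposition13 (Atom : Type) (op : mset -> ExtR) (prec : ExtR -> R -> Prop)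
  (args : list (formula Atom * R)) (N : R) :
  (agg_monotone op prec (map snd args) N ->
     strongly_equivalent (G_formula op prec args N) (G_mono op prec args N)) /\
  (agg_antimonotone op prec (map snd args) N ->
     strongly_equivalent (G_formula op prec args N) (G_anti op prec args N)).
Proof.
  assert (Hlf : length (Fs args) = length args) by (unfold Fs; apply length_map).
  assert (Hlw : length (map snd args) = length args) by apply length_map.
  split; intro Hm; apply se_of; intros X Y;
    unfold G_formula, G_mono, G_anti; rewrite !h_conj.
  - split.
    + intros H I HI Hf. rewrite h_bigOr. apply NNPP; intro Hne.
      set (J := map (fun i => nth i I false &&
                 (if dec (sat Y (reduct X (nth i (Fs args) FBot))) then true else false))
                 (seq 0 (length args))).
      assert (HJ : length J = length args) by apply len_mk.
      assert (HfJ : failing op prec args N J).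
      { intro Hp. apply Hf. eapply Hm; [ | apply sub_full; rewrite Hlw; exact HI | exact Hp ].
        apply mset_sub; try rewrite Hlw; auto.
        intros i Hi. unfold J. rewrite nth_mk by lia. destruct (nth i I false); auto. }
      specialize (H J HJ HfJ). apply h_imp in H. destruct H as [_ H].
      rewrite h_bigAnd, h_bigOr in H.
      assert (Hall : Forall (fun F => sat Y (reduct X F)) (select (Fs args) J)).
      { apply Forall_forall. intros F HF. apply select_In in HF.
        destruct HF as [i [Hi [Hc <-]]]. unfold J in Hc. rewrite nth_mk in Hc by lia.
        destruct (dec _); auto. destruct (nth i I false); discriminate. }
      specialize (H Hall). apply Exists_exists in H. destruct H as [F [HF HY]].
      apply select_In in HF. destruct HF as [k [Hk [Hc HFk]]].
      rewrite nth_negb in Hc by lia. unfold J in Hc. rewrite nth_mk in Hc by lia.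
      subst F. destruct (nth k I false) eqn:EI.
      * destruct (dec _); [discriminate| contradiction].
      * apply Hne. apply Exists_exists. exists (nth k (Fs args) FBot). split; auto.
        apply select_In. exists k. repeat split; auto. rewrite nth_negb by lia. rewrite EI; auto.
    + intros H I HI Hf. specialize (H I HI Hf). apply h_imp. split.
      * intros _. rewrite h_bigOr in H. apply t_bigOr. eapply Exists_impl; [|exact H].
        intros a Ha; exact (h_t X Y a Ha).
      * auto.
  - split.
    + intros H I HI Hf. unfold FNeg. apply h_imp. 
      assert (Ht : ~ sat X (bigAnd (select (Fs args) I))).
      { intro Hta. rewrite t_bigAnd in Hta.
        set (J := map (fun i => nth i I false ||
                 (if dec (sat X (nth i (Fs args) FBot)) then true else false))
                 (seq 0 (length args))).
        assert (HJ : length J = length args) by apply len_mk.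
        assert (HfJ : failing op prec args N J).
        { intro Hp. apply Hf. eapply Hm; [ | apply sub_full; rewrite Hlw; exact HJ | exact Hp ].
          apply mset_sub; try rewrite Hlw; auto.
          intros i Hi. unfold J. rewrite nth_mk by lia. intro E; rewrite E; auto. }
        specialize (H J HJ HfJ). apply h_imp in H. destruct H as [H _].
        rewrite t_bigAnd, t_bigOr in H.
        assert (Hall : Forall (sat X) (select (Fs args) J)).
        { apply Forall_forall. intros F HF. apply select_In in HF.
          destruct HF as [i [Hi [Hc <-]]]. unfold J in Hc. rewrite nth_mk in Hc by lia.
          destruct (nth i I false) eqn:EI.
          - rewrite Forall_forall in Hta. apply Hta. apply select_In. exists i; auto.
          - destruct (dec _); auto; discriminate. }
        specialize (H Hall). apply Exists_exists in H. destruct H as [F [HF HX]].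
        apply select_In in HF. destruct HF as [k [Hk [Hc HFk]]].
        rewrite nth_negb in Hc by lia. unfold J in Hc. rewrite nth_mk in Hc by lia.
        subst F. destruct (nth k I false); [discriminate|].
        destruct (dec _); [discriminate| contradiction]. }
      split; [tauto|]. intro Hh. exfalso. apply Ht. eapply h_t; eauto.
    + intros H I HI Hf. specialize (H I HI Hf). unfold FNeg in H. apply h_imp in H.
      destruct H as [H1 H2]. apply h_imp. split.
      * intro Hx. destruct (H1 Hx).
      * intro Hx. destruct (H2 Hx) as [].
Qed.
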